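(* For every language $L\subseteq\Sigma^+$: if $L\in\mathtt{incl}$-$\mathtt{ESO}$-$\mathtt{HORN}$, then $(\Sigma^+\setminus L)\in LinConj$.
   Context: Fix a finite alphabet $\Sigma$. A nonempty word $w=w_1\cdots w_n$ is represented by the structure $\langle w\rangle=([1,n];(Q_s)_{s\in\Sigma},\mathtt{min},\mathtt{max},\mathtt{suc},\mathtt{pred})$ with $Q_s(i)\iff w_i=s$, $\mathtt{min}(i)\iff i=1$, $\mathtt{max}(i)\iff i=n$, $\mathtt{suc}(i)=\min(i+1,n)$, $\mathtt{pred}(i)=\max(i-1,1)$. For an integer $a$, $x+a$ denotes $\mathtt{suc}^a(x)$ if $a\ge0$ and $\mathtt{pred}^{-a}(x)$ if $a<0$; $y-b=\mathtt{pred}^b(y)$. An inclusion Horn formula is $\Phi=\exists\mathbf{R}\forall x\forall y\,\psi(x,y)$, $\mathbf{R}$ a finite set of binary relation symbols, $\psi$ a conjunction of Horn clauses over $\{(Q_s)_{s\in\Sigma},\mathtt{min},\mathtt{max},\mathtt{suc},\mathtt{pred}\}\cup\mathbf{R}\cup\{=,\le,<\}$, each of the form $x\le y\wedge\delta_1\wedge\cdots\wedge\delta_r\to\delta_0$ with $\delta_0$ an atom $R(x,y)$ ($R\in\mathbf{R}$) or $\bot$, each $\delta_i$ one of: $U(x+a)$, $\neg U(x+a)$, $U(y+a)$, $\neg U(y+a)$ for $U\in\{(Q_s)_{s\in\Sigma},\mathtt{min},\mathtt{max}\}$, $a\in\mathbb Z$; $x=y$ or $x<y$; $S(x+a,y-b)\wedge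 x+a\le y-b$ with $S\in\mathbf{R}$, $a,b\ge0$. $\mathtt{incl}$-$\mathtt{ESO}$-$\mathtt{HORN}$ is the class of languages $\{w\in\Sigma^+:\langle w\rangle\models\Phi\}$. A linear conjunctive grammar is $G=(\Sigma,N,P,S)$ with nonterminals $N$, start symbol $S\in N$, and a finite set $P$ of rules $A\to\alpha_1\&\cdots\&\alpha_k$ ($k\ge1$), each $\alpha_i\in\Sigma^*\cup\Sigma^*N\Sigma^*$. The languages $(L(A))_{A\in N}$ form the least (componentwise) solution of $L(A)=\bigcup_{(A\to\alpha_1\&\cdots\&\alpha_k)\in P}\bigcap_iL(\alpha_i)$, where $L(uBv)=uL(B)v$, $L(u)=\{u\}$ for $u,v\in\Sigma^*$, $B\in N$; $L(G)=L(S)$. $LinConj$ is the class of languages generated by such grammars. *)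

(* Defs.v *)
From Stdlib Require List.
From mathcomp Require Import all_boot ssralg ssrint.
Set Implicit Arguments. Unset Strict Implicit. Unset Printing Implicit Defensive.

Section Defs.
Variable Sigma : finType.

Definition suc (n i : nat) : nat := minn i.+1 n.
Definition predp (i : nat) : nat := maxn i.-1 1.

Definition shift (n : nat) (i : nat) (a : int) : nat :=
  match a with
  | Posz m => iter m (suc n) i
  | Negz m => iter m.+1 predp i
  end.

Definition shiftm (i b : nat) : nat := iter b predp i.

Inductive upred := UQ of Sigma | UMin | UMax.

Definition upred_sem (w : seq Sigma) (U : upred) (p : nat) : bool :=
  match U with
  | UQ s => onth w p.-1 == Some s
  | UMin => p == 1
  | UMax => p == size w
  end.

Inductive var := VX | VY.

Inductive body_atom (k : nat) :=
| BU of bool & upred & var & int      (* U(v+a) if true, not U(v+a) if false *)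
| BEq
| BLt
| BRel of 'I_k & nat & nat.            (* S(x+a, y-b) /\ x+a <= y-b *)

Record clause (k : nat) := Clause {
  cl_body : seq (body_atom k);
  cl_head : option 'I_k   (* Some R : R(x,y);  None : bottom *)
}.

(* inclusion Horn formula  exists R forall x forall y psi *)
Record horn := Horn {
  nrel : nat;
  clauses : seq (clause nrel)
}.

Definition atom_sem (w : seq Sigma) (k : nat) (R : 'I_k -> nat -> nat -> Prop)
    (x y : nat) (d : body_atom k) : Prop :=
  let n := size w in
  match d with
  | BU b U v a =>
      let p := shift n (if v is VX then x else y) a in
      upred_sem w U p = b
  | BEq => x = y
  | BLt => x < y
  | BRel Sr a b =>
      R Sr (shift n x (Posz a)) (shiftm y b) /\ shift n x (Posz a) <= shiftm y b
  end.

Definition clause_sem (w : seq Sigma) (k : nat) (R : 'I_k -> nat -> nat -> Prop)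
    (c : clause k) : Prop :=
  forall x y : nat, 1 <= x <= size w -> 1 <= y <= size w ->
    x <= y ->
    foldr (fun d P => atom_sem w R x y d /\ P) True (cl_body c) ->
    match cl_head c with
    | Some Sr => R Sr x y
    | None => False
    end.

Definition models (w : seq Sigma) (Phi : horn) : Prop :=
  exists R : 'I_(nrel Phi) -> nat -> nat -> Prop,
    forall c, List.In c (clauses Phi) -> clause_sem w R c.

(* languages are predicates on Sigma^* ; Sigma^+ = nonempty words *)
Definition incl_ESO_HORN (L : seq Sigma -> Prop) : Prop :=
  exists Phi : horn, forall w, L w <-> (w <> [::] /\ models w Phi).

(* a conjunct alpha_i : either a terminal word u, or u B v *)
Definition conjunct (N : finType) : Type := (seq Sigma + (seq Sigma * N * seq Sigma))%type.

Record lcgrammar (N : finType) := LCGrammar {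
  rules : seq (N * seq (conjunct N))   (* A -> alpha_1 & ... & alpha_k *)
}.

Inductive derives (N : finType) (G : lcgrammar N) : N -> seq Sigma -> Prop :=
| derives_rule (A : N) (alphas : seq (conjunct N)) (w : seq Sigma) :
    List.In (A, alphas) (rules G) ->
    alphas <> [::] ->
    (forall u, List.In (inl u) alphas -> w = u) ->
    (forall u B v, List.In (inr (u, B, v)) alphas ->
       exists w', w = u ++ w' ++ v /\ derives G B w') ->
    derives G A w.

Definition LinConj (L : seq Sigma -> Prop) : Prop :=
  exists (N : finType) (G : lcgrammar N) (S : N),
    forall w, L w <-> derives G S w.

End Defs.

(* Main.v *)
Require Import Defs.
From mathcomp Require Import all_boot ssralg ssrint zify.
From Stdlib Require Import ClassicalEpsilon.
Unset Printing Implicit Defensive.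

Lemma In_mem (T : eqType) (x : T) s : List.In x s <-> x \in s.
Proof.
elim: s => [|a s IH] //=; rewrite in_cons; split.
- by case=> [->|/IH ->]; rewrite ?eqxx ?orbT.
- by case/orP=> [/eqP->|/IH]; [left|right].
Qed.

Lemma foldr_and (T : Type) (Q : T -> Prop) s :
  foldr (fun d P => Q d /\ P) True s <-> (forall d, List.In d s -> Q d).
Proof.
elim: s => [|a s IH] /=; first by split.
split.
- by case=> Ha /IH Hs d [<-|/Hs].
- by move=> H; split; [apply: H; left|apply/IH=> d Hd; apply: H; right].
Qed.

Fixpoint lists {T : Type} (n : nat) (C : seq T) : seq (seq T) :=
  match n with
  | 0 => [:: [::]]
  | n.+1 => [::] :: List.flat_map (fun c => List.map (cons c) (lists n C)) C
  end.

Lemma lists_in (T : Type) n (C : seq T) l :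
  size l <= n -> (forall c, List.In c l -> List.In c C) -> List.In l (lists n C).
Proof.
elim: n l => [|n IH] [|c l] //=; try by left.
all: try by move=> *; left.
move=> Hs Hin; right; apply/List.in_flat_map; exists c; split.
  by apply: Hin; left.
apply/List.in_map; apply: IH => // d Hd; by apply: Hin; right.
Qed.

Lemma fold_max_ge x l : List.In x l -> x <= List.fold_right maxn 0 l.
Proof.
elim: l => [|a l IH] //= [->|/IH H]; first by rewrite leq_maxl.
by apply: leq_trans H (leq_maxr _ _).
Qed.

Definition slice {T : Type} (w : seq T) a b := drop a (take b w).

Lemma size_slice (T : Type) (w : seq T) a b : b <= size w -> size (slice w a b) = b - a.
Proof. by move=> H; rewrite /slice size_drop size_take; case: ltngtP H => //; lia. Qed.


Lemma onth_drop (T : Type) (s : seq T) m k : onth (drop m s) k = onth s (m + k).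
Proof. by rewrite !onthE map_drop nth_drop. Qed.

Lemma onth_take (T : Type) (s : seq T) m k : onth (take m s) k = if k < m then onth s k else None.
Proof.
rewrite !onthE map_take; case: ifP => h; first by rewrite nth_take.
by rewrite nth_default // size_take; case: ltnP; lia.
Qed.

Lemma slice_cat3 (T : Type) (w : seq T) a a1 b1 b :
  a <= a1 -> a1 <= b1 -> b1 <= b -> b <= size w ->
  slice w a b = slice w a a1 ++ slice w a1 b1 ++ slice w b1 b.
Proof.
move=> h1 h2 h3 h4; apply: eq_from_onth => k.
rewrite /slice !onth_cat !onth_drop !onth_take !size_drop !size_take.
repeat case: ifP; try lia; move=> *; try (f_equal; lia).
Qed.

Lemma cat_slice (T : Type) (w : seq T) a b : a <= b -> b <= size w ->
  w = take a w ++ slice w a b ++ drop b w.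
Proof.
move=> h h'; apply: eq_from_onth => k.
rewrite /slice !onth_cat !onth_drop !onth_take !size_drop !size_take.
repeat case: ifP; try lia; move=> *; try (f_equal; lia).
Qed.

Lemma shift_pos n x m : x <= n -> shift n x (Posz m) = minn (x + m) n.
Proof.
move=> h; elim: m => [|m IH]; first by rewrite /= addn0; lia.
rewrite /shift iterS -/(shift n x (Posz m)) IH /suc; lia.
Qed.

Lemma shiftm_eq x m : 1 <= x -> shiftm x m = maxn (x - m) 1.
Proof.
move=> h; elim: m => [|m IH]; first by rewrite /= subn0; lia.
rewrite /shiftm iterS -/(shiftm x m) IH /predp; lia.
Qed.

Lemma shift_neg n x m : 1 <= x -> shift n x (Negz m) = maxn (x - m.+1) 1.
Proof. by move=> h; rewrite -shiftm_eq. Qed.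
Section B.
Set Default Proof Using "All".
Variable Sigma : finType.
Variables (K : nat) (w h : seq Sigma) (x x' : nat).
Hypothesis Hx : 1 <= x <= size w.
Hypothesis Hx' : 1 <= x' <= size h.
Hypothesis HSp : forall r, r <= K.+1 -> (x + r <= size w) = (x' + r <= size h).
Hypothesis HSm : forall r, r <= K.+1 -> (r < x) = (r < x').
Hypothesis HLp : forall r, r <= K -> x + r <= size w -> onth w (x + r).-1 = onth h (x' + r).-1.
Hypothesis HLm : forall r, r <= K -> r < x -> onth w (x - r).-1 = onth h (x' - r).-1.

Lemma up_plus e U : e <= K -> x + e <= size w ->
  upred_sem w U (x + e) = upred_sem h U (x' + e).
Proof.
move=> he hn; case: U => [s||] /=.
- by rewrite HLp.
- have := HSm 1 ltac:(lia). move=> E.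
  apply/eqP/eqP; move: E; case: ltnP; case: ltnP; lia.
- have := HSp e.+1 ltac:(lia). have := HSp e ltac:(lia). rewrite hn. move=> E1 E2.
  apply/eqP/eqP; move: E1 E2; rewrite !addnS; case: ltnP; case: leqP; lia.
Qed.

Lemma up_minus e U : e <= K -> e < x ->
  upred_sem w U (x - e) = upred_sem h U (x' - e).
Proof.
move=> he hn; have hn' : e < x' by rewrite -HSm; lia.
case: U => [s||] /=.
- by rewrite HLm.
- have := HSm e.+1 ltac:(lia). move=> E.
  apply/eqP/eqP; move: E; case: ltnP; case: ltnP; lia.
- have := HSp 1 ltac:(lia). move=> E.
  apply/eqP/eqP; move: E; case: leqP; case: leqP; lia.
Qed.

Lemma shift_plus_tr m : m <= K ->
  minn (x + m) (size w) + x' = minn (x' + m) (size h) + x.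
Proof.
move=> hm; case: (leqP (x + m) (size w)) => h1.
- have := HSp m ltac:(lia); rewrite h1 => /esym h2; lia.
- have := HSp (size w - x) ltac:(lia); have := HSp (size w - x).+1 ltac:(lia).
  move=> E1 E2; move: E1 E2; case: leqP; case: leqP; lia.
Qed.

Lemma shift_minus_tr m : m <= K ->
  maxn (x - m) 1 + x' = maxn (x' - m) 1 + x.
Proof.
move=> hm; case: (ltnP m x) => h1.
- have := HSm m ltac:(lia); rewrite h1 => /esym h2; lia.
- have := HSm (x - 1) ltac:(lia); have := HSm x ltac:(lia).
  move=> E1 E2; move: E1 E2; case: ltnP; case: ltnP; lia.
Qed.

Lemma up_shift_plus m U : m <= K ->
  upred_sem w U (minn (x + m) (size w)) = upred_sem h U (minn (x' + m) (size h)).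
Proof.
move=> hm; have E := shift_plus_tr m hm.
have -> : minn (x + m) (size w) = x + (minn (x + m) (size w) - x) by lia.
have -> : minn (x' + m) (size h) = x' + (minn (x + m) (size w) - x) by lia.
apply: up_plus; lia.
Qed.

Lemma up_shift_minus m U : m <= K ->
  upred_sem w U (maxn (x - m) 1) = upred_sem h U (maxn (x' - m) 1).
Proof.
move=> hm; have E := shift_minus_tr m hm.
have -> : maxn (x - m) 1 = x - (x - maxn (x - m) 1) by lia.
have -> : maxn (x' - m) 1 = x' - (x - maxn (x - m) 1) by lia.
apply: up_minus; lia.
Qed.
End B.

Lemma onth_cat3 {T : Type} (p v s : seq T) k :
  onth (p ++ v ++ s) (size p + k) = if k < size v then onth v k else onth s (k - size v).
Proof. by rewrite !onth_cat ltnNge leq_addr /= addKn. Qed.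

Section A.
Set Default Proof Using "All".
Variable Sigma : finType.
Variables (K M : nat) (p v s p' v' s' : seq Sigma) (i j : nat) (bl br : bool).
Hypothesis hM : 2 * K + 2 <= M.
Hypothesis hi : i <= K.
Hypothesis hj : j <= K.
Hypothesis hv : i + j < size v.
Hypothesis hv' : i + j < size v'.
Hypothesis hbl : ~~ bl -> i = K.
Hypothesis hbr : ~~ br -> j = K.
Hypothesis hp : (p == [::]) = bl.
Hypothesis hp' : (p' == [::]) = bl.
Hypothesis hs : (s == [::]) = br.
Hypothesis hs' : (s' == [::]) = br.
Hypothesis Hshort : size v <= M -> v' = v.
Hypothesis Hlong : M < size v -> M < size v'.
Hypothesis Hpre : forall t, t < M -> t < size v -> onth v' t = onth v t.
Hypothesis Hsuf : forall t, t < M -> t < size v ->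
  onth v' (size v' - t.+1) = onth v (size v - t.+1).

Lemma sz_facts : (bl -> size p = 0 /\ size p' = 0) /\ (~~ bl -> 0 < size p /\ 0 < size p')
  /\ (br -> size s = 0 /\ size s' = 0) /\ (~~ br -> 0 < size s /\ 0 < size s').
Proof.
move: hp hp' hs hs'; case: bl; case: br; case: p; case: p'; case: s; case: s' => //.
Qed.

Lemma sizeE : size v <= M -> size v' = size v.
Proof. by move=> h; rewrite Hshort. Qed.


Ltac prep := have := sz_facts; have := sizeE; have := Hlong; move: hbl hbr hi hj hv hv' hM;
  case: bl; case: br => /=; intros.

Local Notation x := (size p + i + 1).
Local Notation x' := (size p' + i + 1).
Local Notation y := (size p + size v - j).
Local Notation y' := (size p' + size v' - j).
Local Notation w := (p ++ v ++ s).
Local Notation h := (p' ++ v' ++ s').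

Lemma A_x : 1 <= x <= size w. Proof. rewrite !size_cat; lia. Qed.
Lemma A_x' : 1 <= x' <= size h. Proof. rewrite !size_cat; lia. Qed.
Lemma A_y : 1 <= y <= size w. Proof. rewrite !size_cat; lia. Qed.
Lemma A_y' : 1 <= y' <= size h. Proof. rewrite !size_cat; lia. Qed.

Lemma A_HSp_x r : r <= K.+1 -> (x + r <= size w) = (x' + r <= size h).
Proof.
move=> hr; rewrite !size_cat; case: (leqP (size v) M) => hvM; prep; apply/idP/idP; lia.
Qed.

Lemma A_HSm_x r : r <= K.+1 -> (r < x) = (r < x').
Proof.
move=> hr; case: (leqP (size v) M) => hvM; prep; apply/idP/idP; lia.
Qed.

Lemma A_HSp_y r : r <= K.+1 -> (y + r <= size w) = (y' + r <= size h).
Proof.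
move=> hr; rewrite !size_cat; case: (leqP (size v) M) => hvM; prep; apply/idP/idP; lia.
Qed.

Lemma A_HSm_y r : r <= K.+1 -> (r < y) = (r < y').
Proof.
move=> hr; case: (leqP (size v) M) => hvM; prep; apply/idP/idP; lia.
Qed.

Lemma A_HLp_x r : r <= K -> x + r <= size w -> onth w (x + r).-1 = onth h (x' + r).-1.
Proof.
move=> hr hn.
have -> : (x + r).-1 = size p + (i + r) by lia.
have -> : (x' + r).-1 = size p' + (i + r) by lia.
rewrite !onth_cat3.
case: (ltnP (i + r) (size v)) => h1.
- have h2 : i + r < size v' by case: (leqP (size v) M) => hvM; prep; lia.
  by rewrite h2 Hpre //; lia.
- exfalso; move: hn; rewrite !size_cat; case: (leqP (size v) M) => hvM; prep; lia.
Qed.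

Lemma A_HLm_x r : r <= K -> r < x -> onth w (x - r).-1 = onth h (x' - r).-1.
Proof.
move=> hr hn.
case: (leqP r i) => hri; last first.
  exfalso; move: hn; case: (leqP (size v) M) => hvM; prep; lia.
have -> : (x - r).-1 = size p + (i - r) by lia.
have -> : (x' - r).-1 = size p' + (i - r) by lia.
rewrite !onth_cat3.
have h1 : i - r < size v by lia.
have h2 : i - r < size v' by lia.
by rewrite h1 h2 Hpre //; lia.
Qed.

Lemma A_HLp_y r : r <= K -> y + r <= size w -> onth w (y + r).-1 = onth h (y' + r).-1.
Proof.
move=> hr hn.
case: (leqP r j) => hrj; last first.
  exfalso; move: hn; rewrite !size_cat; case: (leqP (size v) M) => hvM; prep; lia.
have -> : (y + r).-1 = size p + (size v - (j - r).+1) by lia.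
have -> : (y' + r).-1 = size p' + (size v' - (j - r).+1) by lia.
rewrite !onth_cat3.
have h1 : size v - (j - r).+1 < size v by lia.
have h2 : size v' - (j - r).+1 < size v' by lia.
by rewrite h1 h2 Hsuf //; lia.
Qed.

Lemma A_HLm_y r : r <= K -> r < y -> onth w (y - r).-1 = onth h (y' - r).-1.
Proof.
move=> hr hn.
case: (ltnP (j + r) (size v)) => hrj; last first.
  exfalso; move: hn; case: (leqP (size v) M) => hvM; prep; lia.
have h3 : j + r < size v' by case: (leqP (size v) M) => hvM; prep; lia.
have -> : (y - r).-1 = size p + (size v - (j + r).+1) by lia.
have -> : (y' - r).-1 = size p' + (size v' - (j + r).+1) by lia.
rewrite !onth_cat3.
have h1 : size v - (j + r).+1 < size v by lia.
have h2 : size v' - (j + r).+1 < size v' by lia.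
by rewrite h1 h2 Hsuf //; lia.
Qed.
End A.



Section Main.
Variable Sigma : finType.
Variable Phi : horn Sigma.

Local Notation k := (nrel Phi).
Local Notation batom := (body_atom Sigma k).
Local Notation cls := (clauses Phi).

Definition atom_bound (d : batom) : nat :=
  match d with
  | BU _ _ _ a => absz a
  | BRel _ a b => maxn a b
  | _ => 0
  end.

Definition Kb : nat := List.fold_right maxn 0
  (List.map (fun c => List.fold_right maxn 0 (List.map atom_bound (cl_body c))) cls).
Definition Mb : nat := 2 * Kb + 2.
Definition Lc : nat := (List.fold_right maxn 0 (List.map (fun c => size (cl_body c)) cls)).+1.

Lemma atom_bound_le c d : List.In c cls -> List.In d (cl_body c) -> atom_bound d <= Kb.
Proof.
move=> hc hd; apply: leq_trans (fold_max_ge _ _ (List.in_map _ _ _ hc)).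
exact: fold_max_ge _ _ (List.in_map _ _ _ hd).
Qed.

Lemma body_size_le c : List.In c cls -> (size (cl_body c)).+1 <= Lc.
Proof. by move=> hc; rewrite ltnS; apply: fold_max_ge (List.in_map _ _ _ hc). Qed.

Definition body (H : seq Sigma) (R : 'I_k -> nat -> nat -> Prop) x y (c : clause Sigma k) :=
  foldr (fun d P => atom_sem H R x y d /\ P) True (cl_body c).

Definition Pdef (H : seq Sigma) (R : 'I_k -> nat -> nat -> Prop) : Prop :=
  forall c, List.In c cls -> forall S, cl_head c = Some S ->
  forall x y, 1 <= x <= size H -> 1 <= y <= size H -> x <= y -> body H R x y c -> R S x y.

Definition lfp (H : seq Sigma) S x y : Prop := forall R, Pdef H R -> R S x y.

Lemma atom_mono (H : seq Sigma) (R R' : 'I_k -> nat -> nat -> Prop) x y d :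
  (forall S a b, R S a b -> R' S a b) -> atom_sem H R x y d -> atom_sem H R' x y d.
Proof. by move=> hR; case: d => //= S a b [h1 h2]; split => //; apply: hR. Qed.

Lemma body_mono (H : seq Sigma) (R R' : 'I_k -> nat -> nat -> Prop) x y c :
  (forall S a b, R S a b -> R' S a b) -> body H R x y c -> body H R' x y c.
Proof.
move=> hR /foldr_and hb; apply/foldr_and => d hd; apply: atom_mono hR _; exact: hb.
Qed.

Lemma lfp_Pdef (H : seq Sigma) : Pdef H (lfp H).
Proof.
move=> c hc S hS x y hx hy hxy hb R HR; apply: (HR c hc S hS x y hx hy hxy).
by apply: body_mono hb => S' a b; apply.
Qed.

Definition bot_at (H : seq Sigma) := exists c x y, List.In c cls /\ cl_head c = None /\
  1 <= x <= size H /\ 1 <= y <= size H /\ x <= y /\ body H (lfp H) x y c.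

Lemma models_bot (H : seq Sigma) : models H Phi <-> ~ bot_at H.
Proof.
split.
- case=> R HR [c [x [y [hc [hn [hx [hy [hxy hb]]]]]]]].
  have PR : Pdef H R.
    move=> c' hc' S hS x' y' hx' hy' hxy' hb'; have := HR c' hc' x' y' hx' hy' hxy'.
    by rewrite hS; apply.
  have := HR c hc _ _ hx hy hxy; rewrite hn; apply.
  by apply: body_mono hb => S a b; apply.
- move=> hnb; exists (lfp H) => c hc x y hx hy hxy hb.
  case E: (cl_head c) => [S|].
  + exact: lfp_Pdef hc S E x y hx hy hxy hb.
  + by apply: hnb; exists c, x, y.
Qed.

Definition shape : finType := ('I_Kb.+1 * 'I_Kb.+1 * bool * bool)%type.
Definition NT : finType := ((option 'I_k * shape) + (bool * bool) + unit)%type.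
Definition Tn (o : option 'I_k) (sh : shape) : NT := inl (inl (o, sh)).
Definition Qn (cl cr : bool) : NT := inl (inr (cl, cr)).
Definition AnyN : NT := inr tt.

Definition Tgoal (o : option 'I_k) (H : seq Sigma) x y : Prop :=
  match o with
  | Some Sr => lfp H Sr x y
  | None => exists c, List.In c cls /\ cl_head c = None /\ body H (lfp H) x y c
  end.

Definition Tsem (o : option 'I_k) (sh : shape) (v : seq Sigma) : Prop :=
  let: (i, j, bl, br) := sh in
  i + j < size v /\ (~~ bl -> i = Kb :> nat) /\ (~~ br -> j = Kb :> nat) /\
  forall p s : seq Sigma, (p == [::]) = bl -> (s == [::]) = br ->
    Tgoal o (p ++ v ++ s) (size p + i + 1) (size p + size v - j).

Definition sem (A : NT) (v : seq Sigma) : Prop :=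
  match A with
  | inl (inl (o, sh)) => Tsem o sh v
  | inl (inr (cl, cr)) => exists u v0 t (sh : shape), v = u ++ v0 ++ t /\
       sh.1.2 = cl && (u == [::]) /\ sh.2 = cr && (t == [::]) /\ Tsem None sh v0
  | inr _ => True
  end.

Definition sound (A : NT) (l : seq (conjunct Sigma NT)) : Prop :=
  forall w, (forall u, List.In (inl u) l -> w = u) ->
   (forall u B t, List.In (inr (u, B, t)) l -> exists w', w = u ++ w' ++ t /\ sem B w') ->
   sem A w.

Definition words : seq (seq Sigma) := lists (2 * Mb) (enum Sigma).

Definition CJ : seq (conjunct Sigma NT) :=
  List.map inl words ++
  List.flat_map (fun u => List.flat_map (fun B => List.map (fun t => inr (u, B, t)) words) (enum NT)) words.

Definition sel (A : NT) (l : seq (conjunct Sigma NT)) : bool :=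
  if excluded_middle_informative (sound A l /\ l <> [::]) then true else false.

Definition grules : seq (NT * seq (conjunct Sigma NT)) :=
  List.flat_map (fun A => List.map (fun l => (A, l)) (List.filter (sel A) (lists Lc CJ))) (enum NT).

Definition G : lcgrammar Sigma NT := LCGrammar grules.

Lemma words_in u : size u <= 2 * Mb -> List.In u words.
Proof.
move=> hu; apply: lists_in => // a _; apply/In_mem; exact: mem_enum.
Qed.

Lemma CJ_inl u : size u <= 2 * Mb -> List.In (inl u) CJ.
Proof. by move=> hu; apply: List.in_or_app; left; apply: List.in_map; apply: words_in. Qed.

Lemma CJ_inr u B t : size u <= 2 * Mb -> size t <= 2 * Mb -> List.In (inr (u, B, t)) CJ.
Proof.
move=> hu ht; apply: List.in_or_app; right.
apply/List.in_flat_map; exists u; split; first exact: words_in.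
apply/List.in_flat_map; exists B; split; first by apply/In_mem; exact: mem_enum.
by apply: List.in_map; apply: words_in.
Qed.

Lemma rules_in A l : List.In (A, l) grules -> sound A l /\ l <> [::].
Proof.
case/List.in_flat_map => A' [_ /List.in_map_iff [l' [[<- <-] /List.filter_In [_]]]].
by rewrite /sel; case: excluded_middle_informative.
Qed.

Fixpoint G_sound A w (H : derives G A w) {struct H} : sem A w :=
  match H with
  | derives_rule A l w Hin Hne H1 H2 =>
     (proj1 (rules_in A l Hin)) w H1 (fun u B t Hi => match H2 u B t Hi with
        ex_intro w' (conj e d) => ex_intro _ w' (conj e (G_sound B w' d)) end)
  end.

Lemma derive_by A l w : size l <= Lc -> (forall a, List.In a l -> List.In a CJ) ->
  sound A l -> l <> [::] ->
  (forall u, List.In (inl u) l -> w = u) ->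
  (forall u B t, List.In (inr (u, B, t)) l -> exists w', w = u ++ w' ++ t /\ derives G B w') ->
  derives G A w.
Proof.
move=> hs hC hso hne h1 h2; apply: (@derives_rule Sigma NT G A l) => //.
apply/List.in_flat_map; exists A; split; first by apply/In_mem; exact: mem_enum.
apply: List.in_map; apply/List.filter_In; split; first exact: lists_in.
by rewrite /sel; case: excluded_middle_informative => // -[]; split.
Qed.

Lemma Mb_pos : 0 < Mb. Proof. by rewrite /Mb; lia. Qed.
Lemma W_pos : 0 < 2 * Mb. Proof. by rewrite /Mb; lia. Qed.

Lemma any_derive z : derives G AnyN z.
Proof.
elim: z => [|a z IH].
- apply: (derive_by _ [:: inl [::]]) => //.
  + by move=> ? [<-|[]]; apply: CJ_inl.
  + by move=> u [[<-]|[]].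
  + by move=> u B t [|[]].
- apply: (derive_by _ [:: inr ([:: a], AnyN, [::])]) => //.
  + by move=> ? [<-|[]]; apply: CJ_inr => //; apply: W_pos.
  + by move=> u [|[]].
  + by move=> u B t [[<- <- <-]|[]]; exists z; rewrite cats0.
Qed.

Lemma Q_from_T (sh : shape) v : derives G (Tn None sh) v -> derives G (Qn sh.1.2 sh.2) v.
Proof.
move=> hd; apply: (derive_by _ [:: inr ([::], Tn None sh, [::])]) => //.
- by move=> ? [<-|[]]; apply: CJ_inr.
- move=> w _ h2; have [w' [-> hw']] := h2 _ _ _ (or_introl erefl).
  by exists [::], w', [::], sh; rewrite !andbT cats0.
- by move=> u [|[]].
- by move=> u B t [[<- <- <-]|[]]; exists v; rewrite cats0.
Qed.

Lemma Q_left cl cr a z : derives G (Qn false cr) z -> derives G (Qn cl cr) (a :: z).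
Proof.
move=> hd; apply: (derive_by _ [:: inr ([:: a], Qn false cr, [::])]) => //.
- by move=> ? [<-|[]]; apply: CJ_inr => //; apply: W_pos.
- move=> w _ h2; have [w' [-> [u [v0 [t [sh [-> [h3 [h4 h5]]]]]]]]] := h2 _ _ _ (or_introl erefl).
  exists (a :: u), v0, t, sh; rewrite cats0 h3 /=; split => //; by rewrite andbF.
- by move=> u [|[]].
- by move=> u B t [[<- <- <-]|[]]; exists z; rewrite cats0.
Qed.

Lemma Q_right cl cr a z : derives G (Qn cl false) z -> derives G (Qn cl cr) (z ++ [:: a]).
Proof.
move=> hd; apply: (derive_by _ [:: inr ([::], Qn cl false, [:: a])]) => //.
- by move=> ? [<-|[]]; apply: CJ_inr => //; apply: W_pos.
- move=> w _ h2; have [w' [-> [u [v0 [t [sh [-> [h3 [h4 h5]]]]]]]]] := h2 _ _ _ (or_introl erefl).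
  exists u, v0, (t ++ [:: a]), sh; rewrite /= -!catA h4; split => //; split => //.
  split => //; rewrite andFb; case: (t) => [|? ?] /=; by rewrite andbF.
- by move=> u [|[]].
- by move=> u B t [[<- <- <-]|[]]; exists z.
Qed.

Lemma Q_lefts cr z u : derives G (Qn false cr) z -> u <> [::] ->
  forall cl, derives G (Qn cl cr) (u ++ z).
Proof.
move=> hd; elim: u => [|a u IH] // _ cl.
case: u IH => [|b u] IH; first exact: Q_left.
by apply: Q_left; apply: IH.
Qed.

Lemma Q_rights cl z t : derives G (Qn cl false) z -> t <> [::] ->
  forall cr, derives G (Qn cl cr) (z ++ t).
Proof.
move=> hd; elim/last_ind: t => [|t a IH] // _ cr.
rewrite -cats1 catA; case: t IH => [|b t] IH; first by rewrite cats0; apply: Q_right.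
by apply: Q_right; apply: IH.
Qed.

Lemma iter_suc n x m : x <= n -> iter m (suc n) x = minn (x + m) n.
Proof. exact: shift_pos. Qed.
Lemma iter_pred x m : 1 <= x -> iter m predp x = maxn (x - m) 1.
Proof. exact: shiftm_eq. Qed.
Lemma predp_iter x m : 1 <= x -> predp (iter m predp x) = maxn (x - m.+1) 1.
Proof. exact: (shift_neg 0). Qed.

Section Transfer.
Set Default Proof Using "All".
Variables (p v s p' v' s' : seq Sigma) (i j : nat) (bl br : bool).
Hypothesis hM : 2 * Kb + 2 <= Mb.
Hypothesis hi : i <= Kb.
Hypothesis hj : j <= Kb.
Hypothesis hv : i + j < size v.
Hypothesis hv' : i + j < size v'.
Hypothesis hbl : ~~ bl -> i = Kb.
Hypothesis hbr : ~~ br -> j = Kb.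
Hypothesis hp : (p == [::]) = bl.
Hypothesis hp' : (p' == [::]) = bl.
Hypothesis hs : (s == [::]) = br.
Hypothesis hs' : (s' == [::]) = br.
Hypothesis Hshort : size v <= Mb -> v' = v.
Hypothesis Hlong : Mb < size v -> Mb < size v'.
Hypothesis Hpre : forall t, t < Mb -> t < size v -> onth v' t = onth v t.
Hypothesis Hsuf : forall t, t < Mb -> t < size v ->
  onth v' (size v' - t.+1) = onth v (size v - t.+1).

Local Notation x := (size p + i + 1).
Local Notation x' := (size p' + i + 1).
Local Notation y := (size p + size v - j).
Local Notation y' := (size p' + size v' - j).
Local Notation w := (p ++ v ++ s).
Local Notation h := (p' ++ v' ++ s').

Local Notation AA L := (L Sigma Kb Mb p v s p' v' s' i j bl br hM hi hj hv hv' hbl hbr hp hp' hs hs' Hshort Hlong Hpre Hsuf).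

Lemma body_transfer c R0 : List.In c cls -> body w R0 x y c ->
  (forall Sr a b, List.In (BRel Sigma Sr a b) (cl_body c) ->
     minn (x + a) (size w) <= maxn (y - b) 1 ->
     exists x1 y1, lfp h Sr x1 y1 /\ x1 <= y1 /\ x1 + x = minn (x + a) (size w) + x' /\
        y1 + y = maxn (y - b) 1 + y') ->
  forall R, (forall Sr a b, lfp h Sr a b -> R Sr a b) -> body h R x' y' c.
Proof.
move=> hc /foldr_and hb Hrel R HR; apply/foldr_and => d hd.
have hbd := atom_bound_le c d hc hd; have := hb d hd.
have Hx := AA A_x; have Hx' := AA A_x'; have Hy := AA A_y; have Hy' := AA A_y'.
have HSpx := AA A_HSp_x; have HSmx := AA A_HSm_x; have HLpx := AA A_HLp_x; have HLmx := AA A_HLm_x.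
have HSpy := AA A_HSp_y; have HSmy := AA A_HSm_y; have HLpy := AA A_HLp_y; have HLmy := AA A_HLm_y.
case: d hd hbd => [b U vr a||| Sr a b] hd /= hbd.
- clear hd; case: vr; case: a hbd => m /= hbd.
  + rewrite !iter_suc; try lia.
    by rewrite (up_shift_plus Sigma Kb w h x x' Hx Hx' HSpx HSmx HLpx HLmx m U hbd).
  + rewrite !predp_iter; try lia.
    by rewrite (up_shift_minus Sigma Kb w h x x' Hx Hx' HSpx HSmx HLpx HLmx m.+1 U hbd).
  + rewrite !iter_suc; try lia.
    by rewrite (up_shift_plus Sigma Kb w h y y' Hy Hy' HSpy HSmy HLpy HLmy m U hbd).
  + rewrite !predp_iter; try lia.
    by rewrite (up_shift_minus Sigma Kb w h y y' Hy Hy' HSpy HSmy HLpy HLmy m.+1 U hbd).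
- case: (leqP (size v) Mb) => hvM; first by rewrite Hshort //; lia.
  have := Hlong hvM; lia.
- case: (leqP (size v) Mb) => hvM; first by rewrite Hshort //; lia.
  have := Hlong hvM; lia.
- move=> [hR hle].
  have ha : a <= Kb by move: hbd; lia.
  have hb' : b <= Kb by move: hbd; lia.
  move: hR hle; rewrite !iter_suc; try lia. rewrite !shiftm_eq; try lia. move=> hR hle.
  have [x1 [y1 [hl [hxy [e1 e2]]]]] := Hrel Sr a b hd hle.
  have T1 := shift_plus_tr Sigma Kb w h x x' Hx Hx' HSpx HSmx HLpx HLmx a ha.
  have T2 := shift_minus_tr Sigma Kb w h y y' Hy Hy' HSpy HSmy HLpy HLmy b hb'.
  have -> : minn (x' + a) (size h) = x1 by lia.
  have -> : maxn (y' - b) 1 = y1 by lia.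
  by split => //; apply: HR.
Qed.
End Transfer.

Definition iw x := minn Kb x.-1.
Definition jw (w : seq Sigma) y := minn Kb (size w - y).
Definition st x := x - iw x.
Definition en (w : seq Sigma) y := y + jw w y.
Definition win (w : seq Sigma) x y := slice w (st x).-1 (en w y).
Definition shape_of (w : seq Sigma) x y : shape :=
  (inord (iw x), inord (jw w y), (st x).-1 == 0, en w y == size w).
Definition check (v : seq Sigma) : conjunct Sigma NT :=
  if size v <= 2 * Mb then inl v else inr (take Mb v, AnyN, drop (size v - Mb) v).
Definition conj_of (w : seq Sigma) x y (d : batom) : conjunct Sigma NT :=
  match d with
  | BRel Sr a b =>
      inr (slice w (st x).-1 (st (shift (size w) x (Posz a))).-1,
           Tn (Some Sr) (shape_of w (shift (size w) x (Posz a)) (shiftm y b)),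
           slice w (en w (shiftm y b)) (en w y))
  | _ => check (win w x y)
  end.
Lemma conj_of_BRel w x y Sr a b : conj_of w x y (BRel Sigma Sr a b) =
      inr (slice w (st x).-1 (st (shift (size w) x (Posz a))).-1,
           Tn (Some Sr) (shape_of w (shift (size w) x (Posz a)) (shiftm y b)),
           slice w (en w (shiftm y b)) (en w y)).
Proof. by []. Qed.

Definition rule_of (w : seq Sigma) c x y := check (win w x y) :: List.map (conj_of w x y) (cl_body c).

Lemma in_rule w c x y al : List.In al (rule_of w c x y) ->
  al = check (win w x y) \/
  exists Sr a b, List.In (BRel Sigma Sr a b) (cl_body c) /\ al = conj_of w x y (BRel Sigma Sr a b).
Proof.
case=> [<-|/List.in_map_iff [d [<- hd]]]; first by left.
case: d hd => [b U vr a||| Sr a b] hd /=; try by left.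
by right; exists Sr, a, b.
Qed.

Lemma check_sim v v' :
  (forall u, check v = inl u -> v' = u) ->
  (forall u B t, check v = inr (u, B, t) -> exists w', v' = u ++ w' ++ t /\ sem B w') ->
  (size v <= Mb -> v' = v) /\ (Mb < size v -> Mb < size v') /\
  (forall t, t < Mb -> t < size v -> onth v' t = onth v t) /\
  (forall t, t < Mb -> t < size v -> onth v' (size v' - t.+1) = onth v (size v - t.+1)).
Proof.
rewrite /check; case: ifP => hv h1 h2.
- by have -> := h1 v erefl; split => //; split.
- move/negbT: hv; rewrite -ltnNge => hv.
  have [z [-> _]] := h2 _ _ _ erefl.
  have hsz : size (take Mb v ++ z ++ drop (size v - Mb) v) = Mb + size z + Mb.
    rewrite !size_cat size_take size_drop.
    have -> : Mb < size v by have := Mb_pos; lia.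
    lia.
  split; first by have := Mb_pos; lia.
  split; first by move=> _; rewrite hsz; have := Mb_pos; lia.
  split.
  + move=> t ht _; rewrite onth_cat size_take.
    have -> : Mb < size v by have := Mb_pos; lia.
    by rewrite ht onth_take ht.
  + move=> t ht _; rewrite hsz onth_cat size_take.
    have -> : Mb < size v by have := Mb_pos; lia.
    have -> : (Mb + size z + Mb - t.+1 < Mb) = false by lia.
    rewrite onth_cat.
    have -> : (Mb + size z + Mb - t.+1 - Mb < size z) = false by lia.
    by rewrite onth_drop; congr onth; lia.
Qed.

Lemma hMb : 2 * Kb + 2 <= Mb. Proof. by []. Qed.

Lemma st_iw x : 1 <= x -> st x + iw x = x /\ 1 <= st x.
Proof. rewrite /st /iw; lia. Qed.
Lemma st_mono x x' : x <= x' -> st x <= st x'.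
Proof. rewrite /st /iw; lia. Qed.
Lemma en_mono w y y' : y <= y' -> y' <= size w -> en w y <= en w y'.
Proof. rewrite /en /jw; lia. Qed.

Ltac fixsz := repeat match goal with
 | |- context [@size (Equality.sort ?E) ?w] => progress change (@size (Equality.sort E) w) with (@size _ w)
 end.

Lemma rule_sound w c x y R0 : List.In c cls -> 1 <= x -> x <= y -> y <= size w ->
  body w R0 x y c -> sound (Tn (cl_head c) (shape_of w x y)) (rule_of w c x y).
Proof.
move=> hc hx hxy hy hb v' Hinl Hinr.
have [Hshort [Hlong [Hpre Hsuf]]] := check_sim (win w x y) v'
  (fun u e => Hinl u (or_introl e)) (fun u B t e => Hinr u B t (or_introl e)).
have hM := hMb.
set v := win w x y in Hshort Hlong Hpre Hsuf *.
have hen : en w y <= size w by rewrite /en /jw; lia.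
have hst : (st x).-1 <= en w y by rewrite /st /en /iw /jw; lia.
have hsv : size v = en w y - (st x).-1 := size_slice _ _ _ _ hen.
have hi : iw x <= Kb by rewrite /iw; lia.
have hj : jw w y <= Kb by rewrite /jw; lia.
have hv : iw x + jw w y < size v by rewrite hsv /st /en /iw /jw; lia.
have hv' : iw x + jw w y < size v'.
  by case: (leqP (size v) Mb) => h; [rewrite Hshort | have := Hlong h; lia].
have hbl : ~~ ((st x).-1 == 0) -> iw x = Kb by rewrite /st /iw => /eqP; lia.
have hbr : ~~ (en w y == size w) -> jw w y = Kb by rewrite /en /jw => /eqP; lia.
rewrite /sem /Tn /Tsem /shape_of /= !inordK ?ltnS //.
split => //; split => //; split => //.
move=> p' s' hp' hs'.
set p := take (st x).-1 w. set s := drop (en w y) w.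
have Ew : w = p ++ v ++ s := cat_slice _ w _ _ hst hen.
have Hsp : size p = (st x).-1 by rewrite size_takel //; lia.
have hp : (p == [::]) = ((st x).-1 == 0) by rewrite -size_eq0 Hsp.
have hs : (s == [::]) = (en w y == size w).
  rewrite -size_eq0 size_drop; fixsz; apply/eqP/eqP => hh; move: hen hh; clear; lia.
have Ex : x = size p + iw x + 1 by rewrite Hsp /st /iw; clear -hx; lia.
have Ey : y = size p + size v - jw w y by rewrite Hsp hsv /st /en /iw /jw; clear -hx hxy hy; lia.
have hb2 : body (p ++ v ++ s) R0 (size p + iw x + 1) (size p + size v - jw w y) c.
  by rewrite -Ew -Ex -Ey.
have BT := body_transfer p v s p' v' s' (iw x) (jw w y) _ _ hM hi hj hv hv' hbl hbr hp hp' hs hs'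
  Hshort Hlong Hpre Hsuf c R0 hc hb2.
have Hrel : forall Sr a b, List.In (BRel Sigma Sr a b) (cl_body c) ->
     minn (size p + iw x + 1 + a) (size (p ++ v ++ s)) <= maxn (size p + size v - jw w y - b) 1 ->
     exists x1 y1, lfp (p' ++ v' ++ s') Sr x1 y1 /\ x1 <= y1 /\
        x1 + (size p + iw x + 1) = minn (size p + iw x + 1 + a) (size (p ++ v ++ s)) + (size p' + iw x + 1) /\
        y1 + (size p + size v - jw w y) = maxn (size p + size v - jw w y - b) 1 + (size p' + size v' - jw w y).
  move=> Sr a b hd; rewrite -Ew -Ex -Ey => hle.
  have [vd [Ev' Hvd]] := Hinr _ _ _ (or_intror (List.in_map (conj_of w x y) _ _ hd)).
  move: Ev' Hvd; rewrite shift_pos; last by lia. rewrite shiftm_eq; last by lia.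
  set x1 := minn (x + a) (size w); set y1 := maxn (y - b) 1.
  set ud := slice w _ _; set td := slice w _ _ => Ev'.
  rewrite /sem /Tn /Tsem /shape_of /= !inordK ?ltnS; try (rewrite /iw /jw; lia).
  move=> [hvd [_ [_ Hall]]].
  have hud : size ud = (st x1).-1 - (st x) .-1.
    by apply: size_slice; rewrite /st /iw /x1; lia.
  have htd : size td = en w y - en w y1 by apply: size_slice.
  have hv'sz : size v' = size ud + size vd + size td by rewrite Ev' !size_cat addnA.
  have Hl := Hall (p' ++ ud) (td ++ s').
  have EH : (p' ++ ud) ++ vd ++ td ++ s' = p' ++ v' ++ s' by rewrite Ev' !catA.
  rewrite EH in Hl.
  have hp1 : (p' ++ ud == [::]) = ((st x1).-1 == 0).
    move: hp'; rewrite -!size_eq0 size_cat hud; fixsz.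
    move: hle hx hxy hy; rewrite /x1 /st /iw; clear.
    by repeat (case: eqP => ?); try done; move=> *; exfalso; lia.
  have hs1 : (td ++ s' == [::]) = (en w y1 == size w).
    move: hs'; rewrite -!size_eq0 size_cat htd; fixsz.
    move: hle hen hy hxy hx; rewrite /y1 /en /jw; clear.
    by repeat (case: eqP => ?); try done; move=> *; exfalso; lia.
  have {Hl} Hl := Hl hp1 hs1.
  exists (size (p' ++ ud) + iw x1 + 1), (size (p' ++ ud) + size vd - jw w y1).
  split => //; split; first by move: hvd; clear; lia.
  rewrite size_cat hud hv'sz hud htd.
  have f1 : x <= x1 by rewrite /x1; clear -hxy hy; lia.
  have f2 : y1 <= y by rewrite /y1; clear -hx hxy; lia.
  have f3 := st_iw x hx. have f4 := st_iw x1 ltac:(clear -hx f1; lia).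
  have f5 := st_mono x x1 f1.
  have f6 := en_mono w y1 y f2 hy.
  have f7 : jw w y1 < size vd by move: hvd; clear; lia.
  have f0 : x1 <= y1 := hle.
  move: f0 f1 f2 f3 f4 f5 f6 f7 hx hxy hy; rewrite /en; clearbody x1 y1; clear; lia.
case E: (cl_head c) => [Sr|] /=.
- move=> R HR; apply: (HR c hc Sr E).
  + exact: (A_x' Sigma Kb Mb p v s p' v' s' _ _ _ _ hM hi hj hv hv' hbl hbr hp hp' hs hs' Hshort Hlong Hpre Hsuf).
  + exact: (A_y' Sigma Kb Mb p v s p' v' s' _ _ _ _ hM hi hj hv hv' hbl hbr hp hp' hs hs' Hshort Hlong Hpre Hsuf).
  + by move: hv'; clear; lia.
  + by apply: BT Hrel R (fun S a b hl => hl R HR).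
- exists c; split => //; split => //.
  by apply: BT Hrel (lfp (p' ++ v' ++ s')) (fun _ _ _ hl => hl).
Qed.

Lemma size_slice_le {T : Type} (w : seq T) a b : size (slice w a b) <= b - a.
Proof. rewrite /slice size_drop size_take; case: ifP; lia. Qed.

Definition R1 (w : seq Sigma) (Sr : 'I_k) x1 y1 : Prop :=
  1 <= x1 -> x1 <= y1 -> y1 <= size w -> derives G (Tn (Some Sr) (shape_of w x1 y1)) (win w x1 y1).

Lemma check_CJ v : List.In (check v) CJ.
Proof.
rewrite /check; case: ifP => hv; first exact: CJ_inl.
apply: CJ_inr; rewrite ?size_take ?size_drop; try case: ifP; move/negbT: hv; rewrite -ltnNge; lia.
Qed.

Lemma derive_T w c x y : List.In c cls -> 1 <= x -> x <= y -> y <= size w ->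
  body w (R1 w) x y c -> derives G (Tn (cl_head c) (shape_of w x y)) (win w x y).
Proof.
move=> hc hx hxy hy hb.
have hbf := hb; move/foldr_and: hbf => hbf.
apply: (derive_by _ (rule_of w c x y)).
- by rewrite /rule_of /= size_map; apply: body_size_le.
- move=> al /in_rule [->|[Sr [a [b [hd ->]]]]]; first exact: check_CJ.
  have := atom_bound_le c _ hc hd; rewrite /= => hab.
  rewrite iter_suc; last by clear -hxy hy; lia.
  rewrite shiftm_eq; last by clear -hx hxy; lia.
  apply: CJ_inr; apply: leq_trans (size_slice_le _ _ _) _; rewrite /st /en /iw /jw /Mb;
    move: hab hx hxy hy; clear; lia.
- exact: rule_sound hc hx hxy hy hb.
- by [].
- move=> u /in_rule [|[Sr [a [b [hd //]]]]].
  by rewrite /check; case: ifP => // _ [->].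
- move=> u B t /in_rule [|[Sr [a [b [hd]]]]].
  + rewrite /check; case: ifP => // hv [-> -> ->].
    move/negbT: hv; rewrite -ltnNge => hv.
    exists (slice (win w x y) Mb (size (win w x y) - Mb)); split; last exact: any_derive.
    by apply: cat_slice; lia.
  + move=> [-> -> ->].
    have [hR hle] := hbf _ hd.
    move: hR hle; rewrite /= !iter_suc; last by clear -hxy hy; lia.
    rewrite !shiftm_eq; last by clear -hx hxy; lia.
    move=> hR hle.
    exists (win w (minn (x + a) (size w)) (maxn (y - b) 1)); split.
    * rewrite /win; apply: slice_cat3; rewrite /st /en /iw /jw; move: hle hx hxy hy; clear; lia.
    * apply: hR; move: hle hx hxy hy; clear; lia.
Qed.

Lemma R1_Pdef w : Pdef w (R1 w).
Proof.
move=> c hc Sr hS x y hx hy hxy hb _ _ _.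
have := derive_T w c x y hc _ hxy _ hb; rewrite hS; apply; lia.
Qed.

Lemma complete w : bot_at w -> derives G (Qn true true) w.
Proof.
case=> c [x [y [hc [hn [hx [hy [hxy hb]]]]]]].
have hb1 : body w (R1 w) x y c.
  by apply: body_mono hb => Sr a b hl; apply: hl; apply: R1_Pdef.
have := derive_T w c x y hc ltac:(lia) hxy ltac:(lia) hb1; rewrite hn.
move/Q_from_T; rewrite /shape_of /=.
have hen : en w y <= size w by rewrite /en /jw; lia.
have hst : (st x).-1 <= en w y by rewrite /st /en /iw /jw; lia.
have Ew := cat_slice _ w _ _ hst hen.
set u := take _ w in Ew; set t := drop _ w in Ew.
set v := slice _ _ _ in Ew; rewrite /win -/v => hQ.
have hsu : size u = (st x).-1 by rewrite /u size_takel //; apply: leq_trans hst hen.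
have hst_ : size t = size w - en w y by rewrite /t size_drop.
have ht0 : en w y = size w -> t = [::].
  by move=> e; apply: size0nil; rewrite hst_ e subnn.
have ht1 : en w y <> size w -> t <> [::].
  by move=> ne e; apply: ne; move: hst_ hen; rewrite e /=; clear; lia.
have hu0 : (st x).-1 = 0 -> u = [::] by move=> e; apply: size0nil; rewrite hsu.
have hu1 : (st x).-1 <> 0 -> u <> [::].
  by move=> ne e; apply: ne; move: hsu; rewrite e /=.
have hQ2 : derives G (Qn ((st x).-1 == 0) true) (v ++ t).
  case: (en w y =P size w) hQ => [e|ne] hQ; first by rewrite ht0 // cats0.
  by apply: Q_rights => //; apply: ht1.
rewrite Ew; case: ((st x).-1 =P 0) hQ2 => [e|ne] hQ2; first by rewrite hu0.
by apply: Q_lefts => //; apply: hu1.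
Qed.

Lemma soundQ w : derives G (Qn true true) w -> bot_at w /\ w <> [::].
Proof.
move/G_sound => [u [v0 [t [[[[i j] bl] br] [Ew [/= hbl [hbr]]]]]]].
case=> [hv [_ [_ Hall]]].
have := Hall u t (esym hbl) (esym hbr).
case=> c [hc [hn hb]]; split.
- exists c, (size u + i + 1), (size u + size v0 - j); split => //; split => //.
  rewrite Ew !size_cat; split; first by lia. split; first by lia. split; first by lia.
  exact: hb.
- by move=> E; move: hv; have := f_equal size E; rewrite Ew !size_cat /=; lia.
Qed.
End Main.

From Stdlib Require Import Classical.

Theorem lemma7 (Sigma : finType) (L : seq Sigma -> Prop) :
  (forall w, L w -> w <> [::]) ->
  incl_ESO_HORN L ->
  LinConj (fun w : seq Sigma => w <> [::] /\ ~ L w).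
Proof.
move=> HL [Phi HPhi].
exists (NT Sigma Phi), (G Sigma Phi), (Qn Sigma Phi true true) => w; split.
- move=> [hw hnL]; apply: complete.
  apply: NNPP => hnb; apply: hnL; apply/HPhi; split => //.
  exact/models_bot.
- move=> hd; have [hb hw] := soundQ Sigma Phi w hd; split => //.
  by move/HPhi => [_ /models_bot].
Qed.
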